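(* Let $\Gamma$ be a finite graph on $n$ vertices such that $\operatorname{Aut}(\Gamma)$ acts transitively and imprimitively on $V(\Gamma)$. If $\operatorname{Aut}(\Gamma)$ has a factorizing block system, then $\Gamma$ is uniformly vertex-transitive.
   Context: A permutation of a finite set $X$ with $|X|=n$ is identified with its $n\times n$ permutation matrix (the $(u,v)$ entry is $1$ iff $\sigma(u)=v$); $J_n$ is the all-ones matrix. A group $G$ acting on $X$ is uniformly transitive if there are $n$ distinct elements $\sigma_1,\ldots,\sigma_n\in G$ whose permutation matrices satisfy $\sum_i\sigma_i=J_n$; $\Gamma$ is uniformly vertex-transitive if $\operatorname{Aut}(\Gamma)$ is uniformly transitive on $V(\Gamma)$. For $G$ transitive on $X$, a block is $B\subset X$ with $gB=B$ or $gB\cap B=\emptyset$ for all $g\in G$; it is nontrivial if $1<|B|<|X|$; $G$ is imprimitive if a nontrivial block exists. A block system is $\mathcal B=\{gB:g\in G\}$ for a block $B$; it partitions $X$ into blocks of equal size. The fixer $\mathrm{fix}_\Gamma(\mathcal B)$ is the subgroup of $\operatorname{Aut}(\Gamma)$ of automorphisms mapping each block of $\mathcal B$ to itself; the quotient $\operatorname{Aut}(\Gamma)/\mathrm{fix}_\Gamma(\mathcal B)$ acts faithfully and transitively on $\mathcal B$. A nontrivial block system $\mathcal B$ for $\operatorname{Aut}(\Gamma)$, consisting of $m$ blocks of size $k$, is factorizing if (i) $\mathrm{fix}_\Gamma(\mathcal B)$ contains $k$ distinct elements whose permutation matrices (on $V(\Gamma)$) are pairwise orthogonal for the Schur (entrywise)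 product, i.e. pairwise have zero entrywise product, and (ii) $\operatorname{Aut}(\Gamma)/\mathrm{fix}_\Gamma(\mathcal B)$ acts uniformly transitively on $\mathcal B$. *)

(* Defs.v *)
From HB Require Import structures.
From mathcomp Require Import all_boot all_order all_fingroup.
Set Implicit Arguments. Unset Strict Implicit. Unset Printing Implicit Defensive.
Local Open Scope group_scope.

Section Defs.
Variable V : finType.

Definition graphAut (e : rel V) : {set {perm V}} :=
  [set s : {perm V} | [forall x, [forall y, e (s x) (s y) == e x y]]].

Definition pimg (s : {perm V}) (B : {set V}) : {set V} := [set s x | x in B].

Definition transitive_on (G : {set {perm V}}) : Prop :=
  forall x y : V, exists2 g, g \in G & g x = y.

Definition is_block (G : {set {perm V}}) (B : {set V}) : bool :=
  [forall g in G, (pimg g B == B) || [disjoint pimg g B & B]].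

Definition nontrivial (B : {set V}) : bool := (1 < #|B|) && (#|B| < #|V|).

Definition imprimitive (G : {set {perm V}}) : Prop :=
  exists B : {set V}, is_block G B && nontrivial B.

Definition block_system (G : {set {perm V}}) (B : {set V}) : {set {set V}} :=
  [set pimg g B | g in G].

(* Entry (u,v) of the permutation matrix of s is (s u == v).
   Uniformly transitive: n = #|V| distinct elements whose matrices sum to J_n. *)
Definition uniformly_transitive (G : {set {perm V}}) : Prop :=
  exists sigma : 'I_#|V| -> {perm V},
    [/\ injective sigma, (forall i, sigma i \in G) &
        forall u v : V, (\sum_(i < #|V|) (sigma i u == v)) = 1]%N.

Definition uniformly_vertex_transitive (e : rel V) : Prop :=
  uniformly_transitive (graphAut e).

Definition fixer (G : {set {perm V}}) (P : {set {set V}}) : {set {perm V}} :=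
  [set g in G | [forall C in P, pimg g C == C]].

Definition schur_orth (s t : {perm V}) : Prop :=
  forall u v : V, ((s u == v) * (t u == v) = 0)%N.

(* The block system generated by B (blocks of size k = #|B|, m = #|P| blocks)
   is nontrivial and factorizing.
   (ii) The quotient Aut/fix acts on P by (g fix) C = g C; its elements are
   cosets g fix with g in Aut.  We take m representatives g_i in Aut lying in
   pairwise distinct cosets, whose permutation matrices on P (entry (C,D) is
   (g_i C == D)) sum to J_m. *)
Definition factorizing (e : rel V) (B : {set V}) : Prop :=
  let G := graphAut e in
  let P := block_system G B in
  [/\ is_block G B, nontrivial B,
      (exists tau : 'I_#|B| -> {perm V},
         [/\ injective tau, (forall i, tau i \in fixer G P) &
             forall i j, i != j -> schur_orth (tau i) (tau j)]) &
      (exists g : 'I_#|P| -> {perm V},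
         [/\ (forall i, g i \in G),
             (forall i j, i != j -> (g i)^-1 * g j \notin fixer G P) &
             forall C D, C \in P -> D \in P ->
               (\sum_(i < #|P|) (pimg (g i) C == D))%N = 1%N])].

End Defs.

(* Main.v *)
Require Import Defs.
From mathcomp Require Import all_boot all_order all_fingroup.
Set Implicit Arguments. Unset Strict Implicit.

Section Aux.
Variable V : finType.
Local Open Scope group_scope.

Lemma autM (e : rel V) s t : s \in graphAut e -> t \in graphAut e -> s * t \in graphAut e.
Proof.
rewrite !inE => /forallP Hs /forallP Ht; apply/forallP => x; apply/forallP => y.
rewrite !permM; move: (Hs x) => /forallP /(_ y) /eqP <-.
by move: (Ht (s x)) => /forallP /(_ (s y)).
Qed.

Lemma autV (e : rel V) s : s \in graphAut e -> s^-1 \in graphAut e.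
Proof.
rewrite !inE => /forallP Hs; apply/forallP => x; apply/forallP => y.
move: (Hs (s^-1 x)) => /forallP /(_ (s^-1 y)) /eqP <-.
by rewrite !permKV.
Qed.

Lemma pimg_comp (s t : {perm V}) X : pimg s (pimg t X) = pimg (t * s) X.
Proof.
rewrite /pimg -imset_comp; apply: eq_imset => x; by rewrite /= permM.
Qed.

Lemma pimg_card (s : {perm V}) X : #|pimg s X| = #|X|.
Proof. by rewrite /pimg card_imset //; apply: perm_inj. Qed.

Lemma sum_eq1 (a : V) : (\sum_(v : V) (a == v)) = 1%N.
Proof.
rewrite (bigD1 a) //= eqxx big1 // => v; rewrite eq_sym => /negbTE -> //.
Qed.

Lemma ut_of_pairs (G : {set {perm V}}) m k (f : 'I_m * 'I_k -> {perm V}) :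
  (forall p, f p \in G) -> (forall u v, (\sum_(p : 'I_m * 'I_k) (f p u == v)) = 1)%N ->
  uniformly_transitive G.
Proof.
move=> fG fS.
case: (pickP (fun _ : V => true)) => [u0 _|V0]; last first.
  have c0 : #|V| = 0%N.
    apply/eqP; rewrite -leqn0 leqNgt; apply/negP => /card_gt0P [x _]; by have := V0 x.
  exists (fun _ => 1).
  split; first by move=> i; have := ltn_ord i; rewrite {2}c0.
    by move=> i; have := ltn_ord i; rewrite {2}c0.
  by move=> u; move: (V0 u).
have H : #|V| = #|{: 'I_m * 'I_k}|.
  have := eq_refl (\sum_(v : V) \sum_(p : 'I_m * 'I_k) (f p u0 == v))%N.
  rewrite {1}(eq_bigr (fun _ => 1%N)); last by move=> v _; rewrite fS.
  rewrite exchange_big /= (eq_bigr (fun _ => 1%N) (fun p _ => sum_eq1 (f p u0))).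
  by rewrite !sum1_card => /eqP.
pose h := fun i : 'I_#|V| => enum_val (cast_ord H i).
have hbij : bijective h.
  exists (fun p => cast_ord (esym H) (enum_rank p)) => i; rewrite /h.
    by rewrite enum_valK cast_ordK.
  by rewrite cast_ordKV enum_rankK.
have sumS : forall u v, (\sum_(i < #|V|) (f (h i) u == v))%N = 1%N.
  move=> u v; rewrite -(fS u v) (reindex h) //.
  by case: hbij => g gK hK; exists g => x _; [rewrite gK | rewrite hK].
exists (fun i => f (h i)); split => //.
move=> i j Eij; apply/eqP; apply/negPn/negP => nij.
have := sumS u0 (f (h i) u0).
rewrite (bigD1 i) //= (bigD1 j) //=; last by rewrite eq_sym.
by rewrite Eij eqxx.
Qed.

Lemma blocks_eq (e : rel V) B C D x : is_block (graphAut e) B ->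
  C \in block_system (graphAut e) B -> D \in block_system (graphAut e) B ->
  x \in C -> x \in D -> C = D.
Proof.
move=> bB /imsetP [g gG ->] /imsetP [h hG ->].
move=> /imsetP [b1 b1B ->] /imsetP [b2 b2B E].
have tG : h * g^-1 \in graphAut e by rewrite autM // autV.
move: bB => /forallP /(_ (h * g^-1)); rewrite tG /= => /orP [/eqP tB|dis].
  by rewrite -{1}tB pimg_comp -mulgA mulVg mulg1.
have : (h * g^-1) b2 \in pimg (h * g^-1) B by apply: imset_f.
by rewrite (disjointFl dis) // permM -E permK.
Qed.

Lemma pimg_P (e : rel V) B g C : g \in graphAut e ->
  C \in block_system (graphAut e) B -> pimg g C \in block_system (graphAut e) B.
Proof.
move=> gG /imsetP [h hG ->]; rewrite pimg_comp; apply: imset_f; exact: autM.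
Qed.

Lemma card_blk (e : rel V) B C :
  C \in block_system (graphAut e) B -> #|C| = #|B|.
Proof. by move=> /imsetP [h hG ->]; rewrite pimg_card. Qed.

End Aux.

Theorem mainTheorem9 (V : finType) (e : rel V) :
  symmetric e -> irreflexive e ->
  transitive_on (graphAut e) -> imprimitive (graphAut e) ->
  (exists B : {set V}, factorizing e B) ->
  uniformly_vertex_transitive e.
Proof.
move=> _ _ tr _ [B [bB ntB [tau [tinj tF tO]] [g [gG gF gS]]]].
set G := graphAut e in bB tr tF gG gF gS *.
set P := block_system G B in tF gF gS *.
have [b0 b0B] : exists b, b \in B.
  move: ntB => /andP [/ltnW /card_gt0P [b bB0] _]; by exists b.
have cov : forall u, exists2 C, C \in P & u \in C.
  move=> u; have [h hG hb] := tr b0 u.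
  exists (pimg h B); first exact: imset_f.
  by rewrite -hb; apply: imset_f.
have tG : forall j, tau j \in G by move=> j; have := tF j; rewrite inE => /andP [].
have tC : forall j C u, C \in P -> u \in C -> tau j u \in C.
  move=> j C u CP uC; have := tF j; rewrite inE => /andP [_ /forallP /(_ C)].
  rewrite CP /= => /eqP <-; exact: imset_f.
rewrite /uniformly_vertex_transitive -/G; apply: (@ut_of_pairs V G _ _ (fun p => (tau p.2 * g p.1)%g)).
  by move=> p; apply: autM.
move=> u v.
have [C CP uC] := cov u; have [D DP vD] := cov v.
have jinj : injective (fun j => tau j u).
  move=> i j /= E; apply/eqP; apply/negPn/negP => nij.
  have := tO _ _ nij u (tau i u); by rewrite E eqxx.
have jsurj : forall w, w \in C -> exists j, tau j u = w.
  move=> w wC.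
  have SC : [set tau j u | j : 'I_#|B|] = C.
    apply/eqP; rewrite eqEcard; apply/andP; split.
      by apply/subsetP => y /imsetP [j _ ->]; apply: tC.
    by rewrite card_imset // card_ord (card_blk CP).
  by move: wC; rewrite -SC => /imsetP [j _ ->]; exists j.
rewrite -(gS C D CP DP).
transitivity (\sum_i \sum_j nat_of_bool ((tau j * g i)%g u == v)); first by rewrite pair_bigA.
apply: eq_bigr => i _.
case: eqP => [Eg|nEg].
  have wC : ((g i)^-1)%g v \in C.
    move: vD; rewrite -Eg => /imsetP [c cC ->]; by rewrite permK.
  have [j0 Ej0] := jsurj _ wC.
  rewrite (bigD1 j0) //= permM Ej0 permKV eqxx big1 // => j nj.
  rewrite permM; case: eqP => // E.
  move: nj; have -> : j = j0 by apply: jinj => /=; rewrite Ej0 -E permK.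
  by rewrite eqxx.
rewrite big1 // => j _; apply/eqP; rewrite eqb0; apply/negP => /eqP E.
apply: nEg; apply: (blocks_eq bB (pimg_P (gG i) CP) DP _ vD).
by rewrite -E permM; apply: imset_f; apply: tC.
Qed.
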